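(* Let $\mathbf{c}\in\mathbb{R}^n$, $\mathcal{K}=\{1,\dots,K\}$, and for each $k\in\mathcal{K}$ let $\mathcal{F}_k=\bigcup_{i\in\mathcal{D}_k}\mathcal{C}_{ki}$ with $\mathcal{D}_k$ finite and each $\mathcal{C}_{ki}\subset\mathbb{R}^n$ compact and convex. Define $$LR_{\mathcal{K}}(\boldsymbol{\lambda}_1,\dots,\boldsymbol{\lambda}_K)=\inf\Big\{\big(\mathbf{c}-\textstyle\sum_{k}\boldsymbol{\lambda}_k\big)^\top\mathbf{x}+\sum_{k}\boldsymbol{\lambda}_k^\top\mathbf{v}_k:\ \mathbf{x}\in\mathbb{R}^n,\ \mathbf{v}_k\in\mathcal{F}_k\ \forall k\Big\}.$$ For a partition $\mathcal{P}=\{\mathcal{J}_1,\dots,\mathcal{J}_P\}$ of $\mathcal{K}$ (nonempty, pairwise disjoint sets with union $\mathcal{K}$) and vectors $\boldsymbol{\mu}_1,\dots,\boldsymbol{\mu}_P\in\mathbb{R}^n$, define the partition relaxation $$L_{\mathcal{P}}(\boldsymbol{\mu}_1,\dots,\boldsymbol{\mu}_P)=\sum_{p=1}^P\min\Big\{\boldsymbol{\mu}_p^\top\mathbf{v}:\ \mathbf{v}\in\textstyle\bigcap_{k\in\mathcal{J}_p}\mathcal{F}_k\Big\}.$$ Then for any vectors $\boldsymbol{\lambda}_1,\dots,\boldsymbol{\lambda}_K\in\mathbb{R}^n$ and any partition $\mathcal{P}$ of $\mathcal{K}$, $$L_{\mathcal{P}}\Big(\sum_{j\in\mathcal{J}_1}\boldsymbol{\lambda}_j,\dots,\sum_{j\in\mathcal{J}_P}\boldsymbol{\lambda}_j\Big)\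 \ge\ LR_{\mathcal{K}}(\boldsymbol{\lambda}_1,\dots,\boldsymbol{\lambda}_K).$$
   Context: Convention: the minimum (infimum) over an empty set is $+\infty$. *)

(* Defs.v *)
From HB Require Import structures.
From mathcomp Require Import all_boot all_order all_algebra.
From mathcomp Require Import all_classical all_reals all_analysis.
Set Implicit Arguments. Unset Strict Implicit. Unset Printing Implicit Defensive.
Import Order.TTheory GRing.Theory Num.Theory.
Import numFieldNormedType.Exports.
Local Open Scope classical_set_scope.
Local Open Scope ring_scope.

Definition dotv (R : realType) (n : nat) (a b : 'rV[R]_n) : R :=
  \sum_(i < n) a ord0 i * b ord0 i.

(* F_k = union over i in D_k = {0,..,D k - 1} of C k i *)
Definition Fset (R : realType) (n K : nat) (D : 'I_K -> nat)
  (C : 'I_K -> nat -> set 'rV[R]_n) (k : 'I_K) : set 'rV[R]_n :=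
  [set v | exists2 i, (i < D k)%N & C k i v].

Definition LR (R : realType) (n K : nat) (c : 'rV[R]_n) (D : 'I_K -> nat)
  (C : 'I_K -> nat -> set 'rV[R]_n) (lam : 'I_K -> 'rV[R]_n) : \bar R :=
  ereal_inf [set e | exists x : 'rV[R]_n, exists v : 'I_K -> 'rV[R]_n,
     (forall k, Fset D C k (v k)) /\
     e = ((dotv (c - \sum_(k < K) lam k) x
           + \sum_(k < K) dotv (lam k) (v k))%R)%:E].

(* min { mu^T v : v in S } in the extended reals; min over empty set = +oo.
   (For compact nonempty S the infimum is attained, so this is the min.) *)
Definition emin_lin (R : realType) (n : nat) (mu : 'rV[R]_n)
  (S : set 'rV[R]_n) : \bar R :=
  ereal_inf [set (dotv mu v)%:E | v in S].

(* L_P(mu_1,...,mu_P) where blocks of the partition are indexed by PP and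
   mu J is the vector attached to block J *)
Definition LP (R : realType) (n K : nat) (D : 'I_K -> nat)
  (C : 'I_K -> nat -> set 'rV[R]_n) (PP : {set {set 'I_K}})
  (mu : {set 'I_K} -> 'rV[R]_n) : \bar R :=
  (\sum_(J in PP) emin_lin (mu J) [set v | forall k, k \in J -> Fset D C k v])%E.

(* Main.v *)
Require Import Defs.
From HB Require Import structures.
From mathcomp Require Import all_boot all_order all_algebra.
From mathcomp Require Import all_classical all_reals all_analysis.
Import Order.TTheory GRing.Theory Num.Theory.
Import numFieldNormedType.Exports.
Local Open Scope classical_set_scope.
Local Open Scope ring_scope.

Lemma entry_le (R : realType) n (x : 'rV[R]_n) i : `|x ord0 i| <= `|x|.
Proof.
have -> : `|x| = mx_norm x by [].
rewrite mx_normrE.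
exact: (le_bigmax 0 (fun ij : 'I_1 * 'I_n => `|x ij.1 ij.2|) (ord0, i)).
Qed.

Lemma dotv0 (R : realType) n (a : 'rV[R]_n) : dotv a 0 = 0.
Proof. by rewrite /dotv big1 // => i _; rewrite mxE mulr0. Qed.

Lemma dotv_suml (R : realType) n (I : finType) (P : pred I)
  (f : I -> 'rV[R]_n) v :
  dotv (\sum_(j | P j) f j) v = \sum_(j | P j) dotv (f j) v.
Proof.
rewrite /dotv; under eq_bigr do rewrite summxE mulr_suml.
exact: exchange_big.
Qed.

Lemma dotv_lb (R : realType) n (mu : 'rV[R]_n) (A : set 'rV[R]_n) M :
  (forall v, A v -> `|v| <= M) -> exists B, forall v, A v -> B <= dotv mu v.
Proof.
move=> hM; exists (- ((\sum_(i < n) `|mu ord0 i|) * M)) => v Av.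
rewrite lerNl; apply: le_trans (ler_norm _) _.
rewrite normrN /dotv; apply: le_trans (ler_norm_sum _ _ _) _.
rewrite mulr_suml; apply: ler_sum => i _; rewrite normrM.
apply: ler_wpM2l => //. exact: le_trans (entry_le _ _ v i) (hM _ Av).
Qed.

Lemma Fset_bounded (R : realType) (n K : nat) (D : 'I_K -> nat)
  (C : 'I_K -> nat -> set 'rV[R]_n)
  (hcomp : forall k i, (i < D k)%N -> compact (C k i)) k :
  exists M, forall v, Fset D C k v -> `|v| <= M.
Proof.
have cp : compact (\big[setU/set0]_(i < D k) C k i).
  by apply: bigsetU_compact => i _; apply: hcomp.
have := compact_bounded cp; case => M [_ HM].
exists (M + 1) => v [i iD Cv]; apply: (HM (M + 1)); first by rewrite ltrDl.
by rewrite -bigcup_mkord; exists i.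
Qed.

Theorem proposition4 (R : realType) (n K : nat) (c : 'rV[R]_n)
  (D : 'I_K -> nat) (C : 'I_K -> nat -> set 'rV[R]_n)
  (hcomp : forall k i, (i < D k)%N -> compact (C k i))
  (hconv : forall k i, (i < D k)%N ->
     convex_set (C k i : set (convex_lmodType 'rV[R]_n)))
  (lam : 'I_K -> 'rV[R]_n) (PP : {set {set 'I_K}})
  (hPP : finset.partition PP [set: 'I_K]) :
  (LR c D C lam <= LP D C PP (fun J => (\sum_(j in J) lam j)%R))%E.
Proof.
case/and3P: hPP => /eqP covP triv P0.
set mu := fun J : {set 'I_K} => \sum_(j in J) lam j.
set I := fun J : {set 'I_K} => [set v | forall k, k \in J -> Fset D C k v].
have pbE : forall J k, J \in PP -> (finset.pblock PP k == J) = (k \in J).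
  move=> J k JP; apply/eqP/idP => [<-|kJ]; last exact: finset.def_pblock.
  by rewrite finset.mem_pblock covP inE.
have W : forall w : {set 'I_K} -> 'rV[R]_n, (forall J, J \in PP -> I J (w J)) ->
    (LR c D C lam <= (\sum_(J in PP) dotv (mu J) (w J))%:E)%E.
  move=> w hw; rewrite /LR; apply: ereal_inf_lbound.
  exists 0, (fun k => w (finset.pblock PP k)); split.
    move=> k; have kP : finset.pblock PP k \in PP by rewrite finset.pblock_mem // covP inE.
    by apply: (hw _ kP); rewrite finset.mem_pblock covP inE.
  congr EFin; rewrite dotv0 add0r.
  rewrite (partition_big (finset.pblock PP) (mem PP)) /=; last first.
    by move=> k _; rewrite finset.pblock_mem // covP inE.
  apply: eq_bigr => J JP; rewrite /mu dotv_suml.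
  apply: eq_big => [k|k]; first by rewrite pbE.
  by move=> kJ; rewrite (finset.def_pblock triv JP kJ).
have LB : forall J, J \in PP -> exists B, forall v, I J v -> B <= dotv (mu J) v.
  move=> J JP; have /finset.set0Pn [k kJ] : J != finset.set0.
    by apply: contraNneq P0 => <-.
  have [M hM] := @Fset_bounded R n K D C hcomp k.
  have [B hB] := @dotv_lb R n (mu J) (I J) M (fun v Iv => hM v (Iv k kJ)).
  by exists B.
have eminB : forall J, J \in PP -> exists B : R,
    (B%:E <= emin_lin (mu J) (I J))%E.
  move=> J JP; have [B hB] := LB J JP; exists B.
  by apply/ereal_infP => y [v Iv <-]; rewrite lee_fin; apply: hB.
have nNy : forall J, J \in PP -> emin_lin (mu J) (I J) != -oo%E.
  move=> J JP; have [B hB] := eminB J JP.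
  by apply: contraTneq hB => ->; rewrite leeNy_eq.
rewrite /LP -/mu.
have [allne|notall] := pselect (forall J, J \in PP -> exists v, I J v).
  have fin : forall J, J \in PP ->
      emin_lin (mu J) (I J) = (fine (emin_lin (mu J) (I J)))%:E.
    move=> J JP; have [v Iv] := allne J JP; apply/esym/fineK.
    rewrite fin_numE nNy // andTb.
    have : (emin_lin (mu J) (I J) <= (dotv (mu J) v)%:E)%E.
      by apply: ereal_inf_lbound; exists v.
    by apply: contraTneq => ->; rewrite leye_eq.
  rewrite (eq_bigr (fun J => (fine (emin_lin (mu J) (I J)))%:E)); last first.
    by move=> J JP; apply: fin.
  rewrite sumEFin; apply/lee_addgt0Pr => e e0.
  have hv : forall J, exists v, J \in PP -> I J v /\
      dotv (mu J) v < fine (emin_lin (mu J) (I J)) + e / (#|PP|.+1)%:R.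
    move=> J; case: (boolP (J \in PP)) => JP; last by exists 0.
    have : (emin_lin (mu J) (I J) <
        (fine (emin_lin (mu J) (I J)) + e / (#|PP|.+1)%:R)%:E)%E.
      by rewrite {1}fin // lte_fin ltrDl divr_gt0 // ltr0n.
    by case/ereal_inf_lt => y [v Iv <-]; rewrite lte_fin => lt; exists v.
  have [w hw] := choice hv.
  apply: le_trans (W w (fun J JP => (hw J JP).1)) _.
  rewrite -EFinD lee_fin.
  apply: (@le_trans _ _ (\sum_(J in PP) (fine (emin_lin (mu J) (I J)) + e / (#|PP|.+1)%:R))).
    by apply: ler_sum => J JP; apply: ltW; exact: (hw J JP).2.
  rewrite big_split /= lerD2l sumr_const -[_ *+ #|PP|]mulr_natr.
  rewrite mulrAC ler_pdivrMr ?ltr0n // ler_pM2l // ler_nat leqnSn //.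
have [J0 [J0P nJ0]] : exists J0, J0 \in PP /\ ~ exists v, I J0 v.
  apply: contrapT => H; apply: notall => J JP; apply: contrapT => nv.
  by apply: H; exists J.
rewrite (bigD1 J0) //=.
have -> : emin_lin (mu J0) [set v | forall k, k \in J0 -> Fset D C k v] = +oo%E.
  rewrite /emin_lin (_ : [set _ | v in _] = set0) ?ereal_inf0 //.
  by apply/seteqP; split => // y [v Iv _]; exfalso; apply: nJ0; exists v.
rewrite addye ?leey //.
elim/big_ind: _ => //; first by move=> x y; rewrite adde_eq_ninfty => /negbTE -> /negbTE ->.
by move=> J /andP[JP _]; apply: nNy.
Qed.
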